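(* Let $\Lambda$ be a split-by-nilpotent extension of a finite dimensional algebra $A$. Then the triangle functor $-\otimes_A\Lambda:K^b(\mathrm{proj}\,A)\to K^b(\mathrm{proj}\,\Lambda)$ sends indecomposable objects to indecomposable objects.
   Context: $\Lambda$ is a split-by-nilpotent extension of $A$: there is a surjective algebra homomorphism $\pi:\Lambda\to A$ with nilpotent kernel and an algebra homomorphism $\iota:A\to\Lambda$ with $\pi\circ\iota=\mathrm{id}_A$; $\Lambda$ is a left $A$-module via $\iota$ and $A$ a left $\Lambda$-module via $\pi$. $K^b(\mathrm{proj}\,B)$ is the bounded homotopy category of finitely generated projective right $B$-modules. *)

(* Defs.v *)
From HB Require Import structures.
From mathcomp Require Import all_boot all_order all_algebra all_field.
Set Implicit Arguments. Unset Strict Implicit. Unset Printing Implicit Defensive.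
Import GRing.Theory.
Local Open Scope ring_scope.

Definition nilpotent_ideal (R : nzRingType) (I : pred R) : Prop :=
  exists m : nat, forall s : seq R,
    size s = m -> all I s -> \prod_(x <- s) x = 0.

Definition split_by_nilpotent (F : fieldType) (A L : falgType F)
    (pi : {lrmorphism L -> A}) (iota : {lrmorphism A -> L}) : Prop :=
  [/\ (forall a : A, exists x : L, pi x = a),
      nilpotent_ideal [pred x : L | pi x == 0]
    & cancel iota pi].

(* The bounded homotopy category K^b(proj R) of f.g. projective right   *)
(* R-modules.  A f.g. projective right R-module is modelled as e R^n    *)
(* (column vectors, R acting on the right) for an idempotent            *)
(* e in M_n(R); Hom_R(e R^n, f R^m) = { X in M_(m,n)(R) | f X e = X },  *)
(* acting by left multiplication.  Complexes are Z-indexed, cohomological *)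
(* (d_i : C_i -> C_(i+1)).                                              *)

Record cx (R : nzRingType) := Cx {
  cdim : int -> nat;
  cidem : forall i : int, 'M[R]_(cdim i);
  cdiff : forall i : int, 'M[R]_(cdim (i + 1), cdim i)
}.

Definition is_bcx (R : nzRingType) (C : cx R) : Prop :=
  [/\ forall i, cidem C i *m cidem C i = cidem C i,
      forall i, cdiff C i = cidem C (i + 1) *m cdiff C i *m cidem C i,
      forall i, cdiff C (i + 1) *m cdiff C i = 0
    & exists a b : int, forall i, (i < a)%R \/ (b < i)%R -> cidem C i = 0].

Definition cxhom (R : nzRingType) (C D : cx R) :=
  forall i : int, 'M[R]_(cdim D i, cdim C i).

Definition is_chain_map (R : nzRingType) (C D : cx R) (f : cxhom C D) : Prop :=
  (forall i, f i = cidem D i *m f i *m cidem C i) /\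
  (forall i, f (i + 1) *m cdiff C i = cdiff D i *m f i).

Definition cxid (R : nzRingType) (C : cx R) : cxhom C C := fun i => cidem C i.

Definition cxcomp (R : nzRingType) (C D E : cx R) (g : cxhom D E) (f : cxhom C D)
  : cxhom C E := fun i => g i *m f i.

Definition cxadd (R : nzRingType) (C D : cx R) (f g : cxhom C D) : cxhom C D :=
  fun i => f i + g i.

Definition cxzero (R : nzRingType) (C D : cx R) : cxhom C D := fun i => 0.

Definition homotopic (R : nzRingType) (C D : cx R) (f g : cxhom C D) : Prop :=
  exists h : forall i : int, 'M[R]_(cdim D i, cdim C (i + 1)),
    (forall i, h i = cidem D i *m h i *m cidem C (i + 1)) /\
    (forall i, f (i + 1) - g (i + 1) = cdiff D i *m h i + h (i + 1) *m cdiff C (i + 1)).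

Definition kb_zero (R : nzRingType) (C : cx R) : Prop :=
  homotopic (cxid C) (cxzero C C).

Definition kb_biproduct (R : nzRingType) (C D1 D2 : cx R) : Prop :=
  exists (i1 : cxhom D1 C) (i2 : cxhom D2 C) (p1 : cxhom C D1) (p2 : cxhom C D2),
    [/\ is_chain_map i1, is_chain_map i2, is_chain_map p1 & is_chain_map p2] /\
    [/\ homotopic (cxcomp p1 i1) (cxid D1),
        homotopic (cxcomp p2 i2) (cxid D2),
        homotopic (cxcomp p1 i2) (cxzero D2 D1),
        homotopic (cxcomp p2 i1) (cxzero D1 D2)
      & homotopic (cxadd (cxcomp i1 p1) (cxcomp i2 p2)) (cxid C)].

Definition kb_indecomposable (R : nzRingType) (C : cx R) : Prop :=
  is_bcx C /\ ~ kb_zero C /\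
  forall D1 D2 : cx R, is_bcx D1 -> is_bcx D2 ->
    kb_biproduct C D1 D2 -> kb_zero D1 \/ kb_zero D2.

(* The functor - (x)_A Lambda on objects: (e A^n) (x)_A Lambda = iota(e) Lambda^n,
   and on morphisms/differentials X |-> iota(X). *)
Definition tensor_cx (A L : nzRingType) (iota : A -> L) (C : cx A) : cx L :=
  @Cx L (cdim C) (fun i => map_mx iota (cidem C i)) (fun i => map_mx iota (cdiff C i)).

(* Main.v *)
Require Import Defs.
From HB Require Import structures.
From mathcomp Require Import all_boot all_order all_algebra all_field.
From Stdlib Require Import FunctionalExtensionality.
Set Implicit Arguments. Unset Strict Implicit. Unset Printing Implicit Defensive.
Import GRing.Theory.
Local Open Scope ring_scope.

Section Map.
Variables (R S : nzRingType) (f : {rmorphism R -> S}).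

Lemma map_bcx (C : cx R) : is_bcx C -> is_bcx (tensor_cx f C).
Proof.
move=> [H1 H2 H3 [a [b Hb]]]; split => /=.
- by move=> i; rewrite -map_mxM H1.
- by move=> i; rewrite -!map_mxM -H2.
- by move=> i; rewrite -map_mxM H3 map_mx0.
- by exists a, b => i Hi; rewrite Hb // map_mx0.
Qed.

Lemma map_chain (C D : cx R) (g : cxhom C D) :
  is_chain_map g ->
  is_chain_map (C := tensor_cx f C) (D := tensor_cx f D) (fun i => map_mx f (g i)).
Proof.
move=> [H1 H2]; split => i /=.
- by rewrite -!map_mxM -H1.
- by rewrite -!map_mxM H2.
Qed.

Lemma map_homotopic (C D : cx R) (g1 g2 : cxhom C D)
   (g1' g2' : cxhom (tensor_cx f C) (tensor_cx f D)) :
  homotopic g1 g2 ->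
  (forall i, map_mx f (g1 i) = g1' i) -> (forall i, map_mx f (g2 i) = g2' i) ->
  homotopic g1' g2'.
Proof.
move=> [h [H1 H2]] E1 E2.
exists (fun i => map_mx f (h i)); split => i /=.
- by rewrite -!map_mxM -H1.
- by rewrite -E1 -E2 -map_mxB H2 map_mxD !map_mxM.
Qed.

Lemma map_kb_zero (C : cx R) : kb_zero C -> kb_zero (tensor_cx f C).
Proof.
move=> H; apply: (map_homotopic H) => i //.
by rewrite /cxzero map_mx0.
Qed.

Lemma map_biproduct (C D1 D2 : cx R) :
  kb_biproduct C D1 D2 ->
  kb_biproduct (tensor_cx f C) (tensor_cx f D1) (tensor_cx f D2).
Proof.
move=> [i1 [i2 [p1 [p2 [[c1 c2 c3 c4] [h1 h2 h3 h4 h5]]]]]].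
exists (fun i => map_mx f (i1 i)), (fun i => map_mx f (i2 i)),
       (fun i => map_mx f (p1 i)), (fun i => map_mx f (p2 i)).
split; first by split; apply: map_chain.
split.
- by apply: (map_homotopic h1) => i //; rewrite /cxcomp map_mxM.
- by apply: (map_homotopic h2) => i //; rewrite /cxcomp map_mxM.
- by apply: (map_homotopic h3) => i //; rewrite /cxcomp ?map_mxM ?map_mx0.
- by apply: (map_homotopic h4) => i //; rewrite /cxcomp ?map_mxM ?map_mx0.
- by apply: (map_homotopic h5) => i //; rewrite /cxadd /cxcomp map_mxD !map_mxM.
Qed.
End Map.

Lemma tensor_cancel (R S : nzRingType) (pi : {rmorphism R -> S})
  (iota : {rmorphism S -> R}) (C : cx S) :
  cancel iota pi -> tensor_cx pi (tensor_cx iota C) = C.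
Proof.
move=> K; case: C => n e d; rewrite /tensor_cx /=; congr Cx.
- apply: functional_extensionality_dep => i.
  by apply/matrixP => a b; rewrite !mxE K.
- apply: functional_extensionality_dep => i.
  by apply/matrixP => a b; rewrite !mxE K.
Qed.

Fixpoint mpow (R : nzRingType) n (M : 'M[R]_n) k : 'M[R]_n :=
  if k is k'.+1 then M *m mpow M k' else 1%:M.

Lemma mpow_comm (R : nzRingType) p n (A : 'M[R]_(p, n)) X Y k :
  A *m X = Y *m A -> A *m mpow X k = mpow Y k *m A.
Proof.
move=> H; elim: k => [|k IH] /=; first by rewrite mulmx1 mul1mx.
by rewrite mulmxA H -mulmxA IH mulmxA.
Qed.

Lemma mpow_tele (R : nzRingType) n (U : 'M[R]_n) m :
  (1%:M - U) *m (\sum_(k < m) mpow U k) = 1%:M - mpow U m.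
Proof.
elim: m => [|m IH]; first by rewrite big_ord0 mulmx0 /= subrr.
rewrite big_ord_recr /= mulmxDr IH mulmxBl mul1mx addrA subrK //.
Qed.

Lemma mpow_nil (R : nzRingType) (I : pred R) n (M : 'M[R]_n) m :
  (forall s : seq R, size s = m -> all I s -> \prod_(x <- s) x = 0) ->
  (forall a b, I (M a b)) -> mpow M m = 0.
Proof.
move=> Hn HM.
have claim : forall k, (k <= m)%N -> forall s, size s = (m - k)%N -> all I s ->
    forall a b, \prod_(x <- s) x * mpow M k a b = 0.
  elim=> [|k IH] Hk s Hs HI a b.
    by rewrite Hn ?mul0r // Hs subn0.
  rewrite /= mxE mulr_sumr big1 // => c _.
  rewrite mulrA.
  have -> : \prod_(x <- s) x * M a c = \prod_(x <- rcons s (M a c)) x.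
    by rewrite big_rcons.
  apply: IH; first by apply: ltnW.
  - by rewrite size_rcons Hs subnSK.
  - by rewrite all_rcons HM HI.
apply/matrixP => a b; rewrite mxE.
have := claim m (leqnn m) [::] _ _ a b.
by rewrite big_nil mul1r subnn; apply.
Qed.

Section Lift.
Variables (R S : nzRingType) (pi : {rmorphism R -> S}) (iota : {rmorphism S -> R}).
Hypothesis K : cancel iota pi.
Hypothesis Nil : nilpotent_ideal [pred x : R | pi x == 0].

Lemma piota n p (M : 'M[S]_(n, p)) : map_mx pi (map_mx iota M) = M.
Proof. by apply/matrixP => a b; rewrite !mxE K. Qed.

Lemma lift_zero (D : cx R) : is_bcx D -> kb_zero (tensor_cx pi D) -> kb_zero D.
Proof.
move=> [Hid Hd Hdd _] [h' [hc' hh']].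
rewrite /cxid /cxzero /= in hc' hh'.
set e := cidem D in Hid Hd Hdd *; set d := cdiff D in Hd Hdd *.
pose h i := e i *m map_mx iota (h' i) *m e (i + 1).
have pih : forall i, map_mx pi (h i) = h' i.
  by move=> i; rewrite /h !map_mxM piota -hc'.
have eh : forall i, e i *m h i = h i by move=> i; rewrite /h !mulmxA Hid.
have he : forall i, h i *m e (i + 1) = h i by move=> i; rewrite /h -!mulmxA Hid.
clearbody h.
have ed : forall i, e (i + 1) *m d i = d i.
  by move=> i; rewrite {1}Hd !mulmxA Hid -Hd.
have de : forall i, d i *m e i = d i.
  by move=> i; rewrite {1}Hd -!mulmxA Hid !mulmxA -Hd.
pose U i := e (i + 1) - (d i *m h i + h (i + 1) *m d (i + 1)).
have piU : forall i, map_mx pi (U i) = 0.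
  move=> i; rewrite /U map_mxB map_mxD (map_mxM _ (d i)) (map_mxM _ (h (i+1))) !pih.
  by rewrite -hh' subr0 subrr.
have eU : forall i, e (i + 1) *m U i = U i.
  move=> i; rewrite /U mulmxBr mulmxDr Hid !mulmxA ed eh //.
have Ue : forall i, U i *m e (i + 1) = U i.
  move=> i; rewrite /U mulmxBl mulmxDl Hid -!mulmxA de he //.
have dU : forall i, d (i + 1) *m U i = U (i + 1) *m d (i + 1).
  move=> i; rewrite /U mulmxBr mulmxDr mulmxBl mulmxDl.
  rewrite !mulmxA Hdd mul0mx add0r -(mulmxA (h _)) Hdd mulmx0 addr0 de ed //.
have [m Hm] := Nil.
have Um : forall i, mpow (U i) m = 0.
  move=> i; apply: (mpow_nil Hm) => a b /=.
  by move/matrixP: (piU i) => /(_ a b); rewrite !mxE => ->.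
pose W i := \sum_(k < m) mpow (U i) k.
have dW : forall i, d (i + 1) *m W i = W (i + 1) *m d (i + 1).
  move=> i; rewrite /W mulmx_sumr mulmx_suml; apply: eq_bigr => k _.
  exact: mpow_comm.
have eW : forall i, e (i + 1) *m W i = W i *m e (i + 1).
  move=> i; rewrite /W mulmx_sumr mulmx_suml; apply: eq_bigr => k _.
  by apply: mpow_comm; rewrite eU Ue.
have vW : forall i, (d i *m h i + h (i + 1) *m d (i + 1)) *m W i = e (i + 1).
  move=> i.
  have -> : d i *m h i + h (i + 1) *m d (i + 1) = e (i + 1) *m (1%:M - U i).
    by rewrite mulmxBr mulmx1 eU /U subKr.
  by rewrite -mulmxA mpow_tele Um subr0 mulmx1.
exists (fun i => h i *m W i); split => i.
- rewrite /cxid -/e !mulmxA eh -mulmxA -eW mulmxA.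
  by rewrite -{2}[i + 1]/(i + 1) -/(e (i+1)) he.
- rewrite /cxid /cxzero subr0 -/e -/d -(vW i) mulmxDl -!mulmxA dW //.
Qed.
End Lift.

Theorem mainTheorem3 (F : fieldType) (A L : falgType F)
    (pi : {lrmorphism L -> A}) (iota : {lrmorphism A -> L}) :
  split_by_nilpotent pi iota ->
  forall C : cx A, is_bcx C -> kb_indecomposable C ->
    kb_indecomposable (tensor_cx iota C).
Proof.
move=> [_ Hnil K] C HC [_ [Cnz Cdec]].
split; first exact: map_bcx.
split.
  move=> z; apply: Cnz.
  by have := map_kb_zero pi z; rewrite tensor_cancel.
move=> D1 D2 b1 b2 bp.
have := map_biproduct pi bp; rewrite tensor_cancel // => bp'.
have [z1|z2] := Cdec _ _ (map_bcx pi b1) (map_bcx pi b2) bp'.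
- by left; apply: (lift_zero K Hnil).
- by right; apply: (lift_zero K Hnil).
Qed.
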